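(* Let $\mathbf L=\{L_1,\dots,L_n\}$ be a finite multiset of positive rationals indexed so that $L_1\ge L_2\ge\cdots\ge L_n$, let $k\in\mathbb N_{>0}$, and suppose $L_{co}\ne l^\star$. Then $(I_{co},\,i\mapsto 1,\,i\mapsto\lceil k/i\rceil)$ is an admissible restriction. Moreover $|\mathcal C(I_{co},1,\lceil k/i\rceil)|=\sum_{i\in I_{co}}\lceil k/i\rceil$, and in the worst case (pairwise distinct lengths, where $|I_{co}|=\min(k-1,n)$) this is $\Theta\bigl(k\log\min(k,n)\bigr)$.
   Context: $m(l)=\sum_{i=1}^n\lfloor L_i/l\rfloor$, $c(l)=\sum_i(\lceil L_i/l\rceil-1)$; $l$ feasible iff $m(l)\ge k$; $l^\star$ is the unique optimal cut length (feasible length minimizing $c$ among feasible lengths; equals the largest feasible length). $L^{(k)}$ is the $k$-th largest element of $\mathbf L$ with multiplicity; $L_{co}=L^{(k)}$ if $k\le n$, $L_{co}=0$ if $k>n$; $I_{co}=\{i: L_i>L_{co}\}$. Candidate multiset $\mathcal C(I,f_l,f_u)=\biguplus_{i\in I}\{L_i/j: j\in\mathbb N,\ f_l(i)\le j\le f_u(i)\}$ (one occurrence per pair). A triple $(I,f_l,f_u)$ with $f_l,f_u:I\to\mathbb N_{>0}$ is an admissible restriction if (i) for all $i\in I$, $f_l(i)=1$ or $L_i/(f_l(i)-1)$ is infeasible; (ii) for all $i\in I$, $L_i/f_u(i)$ is feasible; (iii) for all $i'\notin I$, $L_{i'}$ is feasible and $L_{i'}\ne l^\star$. *)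

(* Defs.v *)
From HB Require Import structures.
From mathcomp Require Import all_boot all_order all_algebra.
Set Implicit Arguments. Unset Strict Implicit. Unset Printing Implicit Defensive.
Import Order.TTheory GRing.Theory Num.Theory.
Local Open Scope ring_scope.

(* The multiset L = {L_1,...,L_n} is the sequence L (n = size L);
   indices are 1-based: L_i = nth 0 L (i-1), for 1 <= i <= n. *)
Definition Li (L : seq rat) (i : nat) : rat := nth 0 L i.-1.

Definition mcount (L : seq rat) (l : rat) : int := \sum_(x <- L) Num.floor (x / l).

Definition ccost (L : seq rat) (l : rat) : int := \sum_(x <- L) (Num.ceil (x / l) - 1).

Definition feasible (L : seq rat) (k : nat) (l : rat) : bool :=
  (0 < l) && ((k%:Z) <= mcount L l).

Definition is_opt_length (L : seq rat) (k : nat) (ls : rat) : Prop :=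
  feasible L k ls /\ forall l, feasible L k l -> l <= ls.

(* L_co = L^(k) (k-th largest, L sorted nonincreasing) if k <= n, 0 otherwise *)
Definition Lco (L : seq rat) (k : nat) : rat :=
  if (k <= size L)%N then Li L k else 0.

Definition Ico (L : seq rat) (k : nat) : pred nat :=
  fun i => [&& (1 <= i)%N, (i <= size L)%N & Lco L k < Li L i].

Definition cdivn (k i : nat) : nat := ((k + i.-1) %/ i)%N.

(* Admissible restriction (I, f_l, f_u), with I a subset of {1..n},
   f_l, f_u : I -> N_{>0}; ls is the optimal cut length l*. *)
Definition admissible (L : seq rat) (k : nat) (ls : rat)
    (I : pred nat) (fl fu : nat -> nat) : Prop :=
  [/\ (forall i, I i -> (1 <= i <= size L)%N),
      (forall i, I i -> (0 < fl i)%N /\ (0 < fu i)%N),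
      (forall i, I i -> fl i = 1%N \/ ~~ feasible L k (Li L i / (fl i).-1%:R)),
      (forall i, I i -> feasible L k (Li L i / (fu i)%:R))
    & (forall i', (1 <= i' <= size L)%N -> ~~ I i' ->
         feasible L k (Li L i') /\ Li L i' <> ls)].

(* Candidate multiset C(I, f_l, f_u): one entry L_i / j per pair (i, j),
   i in I, f_l(i) <= j <= f_u(i); represented as a sequence. *)
Definition cands (L : seq rat) (I : pred nat) (fl fu : nat -> nat) : seq rat :=
  flatten [seq [seq Li L i / j%:R | j <- iota (fl i) ((fu i).+1 - fl i)]
          | i <- iota 1 (size L) & I i].

(* Main.v *)
Require Import Defs.
From HB Require Import structures.
From mathcomp Require Import all_boot all_order all_algebra.
From mathcomp Require Import zify ring lra.
Import Order.TTheory GRing.Theory Num.Theory.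
Local Open Scope ring_scope.

Lemma sorted_nth_ge (L : seq rat) i j :
  sorted (fun x y => y <= x) L -> (i <= j)%N -> (j < size L)%N ->
  nth 0 L j <= nth 0 L i.
Proof.
move=> hs hij hj.
have tr : transitive (fun x y : rat => y <= x).
  by move=> a b c h1 h2; exact: le_trans h2 h1.
have rf : reflexive (fun x y : rat => y <= x) by move=> a; exact: lexx.
apply: (sorted_leq_nth tr rf 0 hs) => //; rewrite inE; lia.
Qed.

Lemma take_ge (L : seq rat) j x :
  sorted (fun x y => y <= x) L -> (0 < j <= size L)%N -> x \in take j L ->
  nth 0 L j.-1 <= x.
Proof.
move=> hs hj /(nthP 0) [p]; rewrite size_take; case: ifP => hjs hp <-;
  rewrite nth_take //; try lia; apply: sorted_nth_ge => //; lia.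
Qed.

Lemma sum_const_int (s : seq rat) (c : nat) :
  \sum_(x <- s) (c%:Z) = (size s * c)%N%:Z.
Proof.
elim: s => [|a s IH]; first by rewrite big_nil.
by rewrite big_cons IH /= mulSn PoszD.
Qed.

Lemma pos_nth (L : seq rat) i : all (fun x => 0 < x) L -> (i < size L)%N ->
  0 < nth 0 L i.
Proof. by move=> /allP ha hi; apply: ha; exact: mem_nth. Qed.

Lemma feas_gen (L : seq rat) (l : rat) j c :
  all (fun x => 0 < x) L -> 0 < l ->
  (forall x, x \in take j L -> c%:R <= x / l) ->
  ((size (take j L) * c)%N%:Z <= mcount L l).
Proof.
move=> ha hl hx.
have -> : mcount L l = \sum_(x <- take j L) Num.floor (x / l)
   + \sum_(x <- drop j L) Num.floor (x / l) by rewrite /mcount -big_cat cat_take_drop.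
rewrite -[X in (X <= _)]addr0; apply: lerD.
  rewrite -sum_const_int !big_seq; apply: ler_sum => x hxt.
  by rewrite floor_ge_int; exact: hx.
rewrite big_seq; apply: sumr_ge0 => x hxd; rewrite floor_ge0 divr_ge0 ?ltW //.
by move/allP: ha; apply; exact: mem_drop hxd.
Qed.

Section NatStuff.
Local Open Scope nat_scope.
Lemma cdivn_low k i : (0 < i)%N -> (k <= i * cdivn k i)%N.
Proof.
move=> i0; rewrite /cdivn.
have := divn_eq (k + i.-1) i; have := ltn_mod (k + i.-1) i; rewrite i0.
set q := (_ %/ _)%N; set r := (_ %% _)%N => hr he.
rewrite mulnC; set x := (q * i)%N in he *; lia.
Qed.

Lemma cdivn_up k i : (0 < i)%N -> (i * cdivn k i <= k + i.-1)%N.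
Proof.
move=> i0; rewrite /cdivn.
have := divn_eq (k + i.-1) i.
set q := (_ %/ _)%N; set r := (_ %% _)%N => he.
rewrite mulnC; set x := (q * i)%N in he *; lia.
Qed.

Lemma cdivn_gt0 k i : (0 < k)%N -> (0 < i)%N -> (0 < cdivn k i)%N.
Proof.
move=> k0 i0; have := @cdivn_low k i i0; case: (cdivn k i) => //; rewrite muln0; lia.
Qed.

Definition G k a b := (\sum_(a <= i < b) cdivn k i)%N.

Lemma G_mono k a b : (1 <= a <= b)%N -> (G k 1 a <= G k 1 b)%N.
Proof.
move=> /andP[h1 h2]; rewrite /G (big_cat_nat h1 h2) /=; exact: leq_addr.
Qed.

Lemma block_low k s : (2 ^ s * k <= 2 ^ s.+1 * G k (2 ^ s) (2 ^ s.+1))%N.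
Proof.
rewrite /G big_distrr /=.
have -> : (2 ^ s * k = \sum_(2 ^ s <= i < 2 ^ s.+1) k)%N.
  by rewrite sum_nat_const_nat expnS; congr (_ * _)%N; lia.
rewrite big_nat [X in (_ <= X)%N]big_nat; apply: leq_sum => i /andP[h1 h2].
apply: (leq_trans (@cdivn_low k i (leq_trans (expn_gt0 2 s) h1))).
by rewrite leq_mul2r ltnW ?orbT.
Qed.

Lemma lower k s : (s * k <= 2 * G k 1 (2 ^ s))%N.
Proof.
elim: s => [|s IH]; first by rewrite mul0n.
have h1 : (1 <= 2 ^ s)%N by rewrite expn_gt0.
have h2 : (2 ^ s <= 2 ^ s.+1)%N by rewrite leq_exp2l.
rewrite /G (big_cat_nat h1 h2) /= -/(G k 1 (2 ^ s)) -/(G k _ _).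
have := block_low k s; rewrite expnS -mulnA.
move: (G k (2 ^ s) _) => B hb.
have hb' : (k <= 2 * B)%N by rewrite -(leq_pmul2l (expn_gt0 2 s)) mulnCA.
move: (G k 1 _) IH hb' => A; lia.
Qed.

Lemma block_up k s : (2 ^ s <= k)%N -> (G k (2 ^ s) (2 ^ s.+1) <= 3 * k)%N.
Proof.
move=> hk.
rewrite -(leq_pmul2l (expn_gt0 2 s)) /G big_distrr /=.
apply: (@leq_trans (\sum_(2 ^ s <= i < 2 ^ s.+1) (k + 2 ^ s.+1))%N).
  rewrite big_nat [X in (_ <= X)%N]big_nat; apply: leq_sum => i /andP[h1 h2].
  have i0 : (0 < i)%N by apply: leq_trans h1; rewrite expn_gt0.
  apply: (leq_trans _ (leq_trans (@cdivn_up k i i0) _)); first by rewrite leq_mul2r h1 orbT.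
  lia.
rewrite sum_nat_const_nat expnS.
have -> : (2 * 2 ^ s - 2 ^ s = 2 ^ s)%N by lia.
rewrite leq_pmul2l ?expn_gt0 //; lia.
Qed.

Lemma upper k s : (2 ^ s <= 2 * k)%N -> (G k 1 (2 ^ s) <= 3 * k * s)%N.
Proof.
elim: s => [|s IH] hk; first by rewrite /G big_geq.
have h1 : (1 <= 2 ^ s)%N by rewrite expn_gt0.
have h2 : (2 ^ s <= 2 ^ s.+1)%N by rewrite leq_exp2l.
rewrite /G (big_cat_nat h1 h2) /= -/(G k 1 (2 ^ s)) -/(G k _ _).
have hk' : (2 ^ s <= k)%N by move: hk; rewrite expnS; lia.
have := @block_up k s hk'; have := IH (leq_trans hk' (leq_addr _ _)).
rewrite mulnS; lia.
Qed.
End NatStuff.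

Lemma size_take_le (L : seq rat) j : (j <= size L)%N -> size (take j L) = j.
Proof. by move=> h; rewrite size_takel. Qed.

Lemma feas_i (L : seq rat) k i :
  all (fun x => 0 < x) L -> sorted (fun x y => y <= x) L -> (0 < k)%N ->
  (1 <= i <= size L)%N -> feasible L k (Li L i / (cdivn k i)%:R).
Proof.
move=> ha hs k0 hi.
have i0 : (0 < i)%N by case/andP: hi.
have c0 := @cdivn_gt0 k i k0 i0.
have a0 : 0 < Li L i by apply: pos_nth => //; lia.
have l0 : 0 < Li L i / (cdivn k i)%:R by rewrite divr_gt0 // ltr0n.
rewrite /feasible l0 /=.
apply: le_trans (@feas_gen L _ i (cdivn k i) ha l0 _).
  by rewrite size_take_le ?lez_nat ?cdivn_low //; case/andP: hi.
move=> x hx.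
have hxa : Li L i <= x by apply: take_ge hs _ hx; rewrite i0 /=; case/andP: hi.
have -> : x / (Li L i / (cdivn k i)%:R) = x * (cdivn k i)%:R / Li L i.
  by field; apply/andP; split; rewrite ?pnatr_eq0 -?lt0n ?gt_eqF.
rewrite ler_pdivlMr // mulrC ler_wpM2r // ler0n.
Qed.

Lemma feas_le (L : seq rat) k l :
  all (fun x => 0 < x) L -> sorted (fun x y => y <= x) L -> (0 < k)%N ->
  (k <= size L)%N -> 0 < l -> l <= Li L k -> feasible L k l.
Proof.
move=> ha hs k0 hk l0 hl.
rewrite /feasible l0 /=.
apply: le_trans (@feas_gen L _ k 1 ha l0 _).
  by rewrite size_take_le // muln1.
move=> x hx; have hxa : Li L k <= x by apply: take_ge hs _ hx; rewrite k0.
by rewrite ler_pdivlMr // mul1r; apply: le_trans hxa.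
Qed.

Lemma Ico_out (L : seq rat) k ls i :
  all (fun x => 0 < x) L -> sorted (fun x y => y <= x) L -> (0 < k)%N ->
  is_opt_length L k ls -> Lco L k <> ls ->
  (1 <= i <= size L)%N -> ~~ Ico L k i ->
  feasible L k (Li L i) /\ Li L i <> ls.
Proof.
move=> ha hs k0 [hfs hopt] hne hi; case/andP: (hi) => h1 h2; rewrite /Ico h1 h2 /= /Lco.
have ai : 0 < Li L i by apply: pos_nth => //; lia.
case: leqP => hk; last by rewrite ai.
rewrite -leNgt => hle.
split; first exact: feas_le.
have hL : Lco L k = Li L k by rewrite /Lco hk.
move=> he; apply: hne; rewrite hL; apply/le_anti/andP; split.
  apply: hopt; apply: feas_le => //; exact: lt_le_trans ai hle.
by rewrite -he.
Qed.

Lemma size_cands (L : seq rat) (I : pred nat) (fu : nat -> nat) :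
  size (cands L I (fun _ => 1%N) fu) = (\sum_(1 <= i < (size L).+1 | I i) fu i)%N.
Proof.
rewrite /cands size_flatten /shape -map_comp sumnE big_map big_filter.
rewrite /index_iota subSS subn0; apply: eq_bigr => i _ /=.
by rewrite size_map size_iota subn1.
Qed.

Lemma part1 (L : seq rat) (k : nat) (ls : rat) :
     all (fun x => 0 < x) L -> sorted (fun x y => y <= x) L -> (0 < k)%N ->
     is_opt_length L k ls -> Lco L k <> ls ->
     admissible L k ls (Ico L k) (fun _ => 1%N) (fun i => cdivn k i)
     /\ size (cands L (Ico L k) (fun _ => 1%N) (fun i => cdivn k i))
        = (\sum_(1 <= i < (size L).+1 | Ico L k i) cdivn k i)%N.
Proof.
move=> ha hs k0 ho hne; split; last exact: size_cands.
have hI i : Ico L k i -> (1 <= i <= size L)%N by case/and3P => -> ->.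
split.
- exact: hI.
- move=> i /hI hi; split => //; apply: cdivn_gt0 => //; lia.
- by move=> i _; left.
- by move=> i /hI hi; apply: feas_i.
- by move=> i hi hn; apply: Ico_out.
Qed.

Lemma Ico_uniq (L : seq rat) k i :
  all (fun x => 0 < x) L -> sorted (fun x y => y <= x) L -> uniq L ->
  Ico L k i = [&& (1 <= i)%N, (i <= size L)%N & (i < k)%N].
Proof.
move=> ha hs hu; rewrite /Ico.
case: (leqP 1 i) => //= h1; case: (leqP i (size L)) => //= h2.
have ai : 0 < Li L i by apply: pos_nth => //; lia.
rewrite /Lco; case: (leqP k (size L)) => hk; last by rewrite ai; apply/esym; clear -h2 hk; lia.
case: (ltnP i k) => hik.
  rewrite lt_def sorted_nth_ge ?andbT //; [|lia|lia].
  rewrite /Li nth_uniq //; clear -h1 h2 hk hik; [apply/negP => /eqP he; lia | by rewrite prednK | rewrite prednK; [exact: hk|lia]].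
apply/negbTE; rewrite -leNgt; apply: sorted_nth_ge => //; clear -h1 h2 hk hik; lia.
Qed.

Lemma sum_restrict n k (F : nat -> nat) :
  (\sum_(1 <= i < n.+1 | [&& (1 <= i)%N, (i <= n)%N & (i < k)%N]) F i
   = \sum_(1 <= i < (minn k.-1 n).+1) F i)%N.
Proof.
rewrite big_mkcond (@big_cat_nat _ _ _ (minn k.-1 n).+1) /=; [|lia|lia].
have -> : (\sum_((minn k.-1 n).+1 <= i < n.+1)
   (if [&& (1 <= i)%N, (i <= n)%N & (i < k)%N] then F i else 0) = 0)%N.
  rewrite big_nat big1 // => i hi.
  by have -> : [&& (1 <= i)%N, (i <= n)%N & (i < k)%N] = false by lia.
rewrite addn0; apply: eq_big_nat => i hi.
by have -> : [&& (1 <= i)%N, (i <= n)%N & (i < k)%N] by lia.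
Qed.

Lemma card_Ico (L : seq rat) k :
  all (fun x => 0 < x) L -> sorted (fun x y => y <= x) L -> uniq L ->
  #|[pred i : 'I_(size L).+1 | Ico L k i]| = minn k.-1 (size L).
Proof.
move=> ha hs hu.
rewrite -sum1_card -(big_mkord (fun i => Ico L k i) (fun _ => 1%N)).
rewrite big_mkcond big_ltn // /= add0n -big_mkcond /=.
under eq_bigl => i do rewrite (@Ico_uniq L k i ha hs hu).
by rewrite sum_restrict sum_nat_const_nat muln1 subn1.
Qed.

Theorem mainTheorem11 :
  (forall (L : seq rat) (k : nat) (ls : rat),
     all (fun x => 0 < x) L -> sorted (fun x y => y <= x) L -> (0 < k)%N ->
     is_opt_length L k ls -> Lco L k <> ls ->
     admissible L k ls (Ico L k) (fun _ => 1%N) (fun i => cdivn k i)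
     /\ size (cands L (Ico L k) (fun _ => 1%N) (fun i => cdivn k i))
        = (\sum_(1 <= i < (size L).+1 | Ico L k i) cdivn k i)%N)
  /\
  (exists c1 c2 : rat, 0 < c1 /\ 0 < c2 /\
   forall (L : seq rat) (k : nat),
     all (fun x => 0 < x) L -> sorted (fun x y => y <= x) L -> (0 < k)%N ->
     uniq L ->
     #|[pred i : 'I_(size L).+1 | Ico L k i]| = minn k.-1 (size L)
     /\ ((1 < minn k (size L))%N ->
         let S := size (cands L (Ico L k) (fun _ => 1%N) (fun i => cdivn k i)) in
         c1 * (k * trunc_log 2 (minn k (size L)))%:R <= S%:R
         /\ S%:R <= c2 * (k * trunc_log 2 (minn k (size L)))%:R)).
Proof.
split; first exact: part1.
exists (1/2), 6; split; first lra; split; first lra.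
move=> L k ha hs k0 hu; split; first exact: card_Ico.
move=> hM S; rewrite /S size_cands.
under eq_bigl => i do rewrite (@Ico_uniq L k i ha hs hu).
rewrite sum_restrict -/(G k 1 _).
set M := minn k (size L) in hM *; set t := trunc_log 2 M; set m := minn k.-1 (size L).
have M0 : (0 < M)%N by lia.
have /andP[hb1 hb2] := @trunc_log_bounds 2 M isT M0; rewrite -/t in hb1 hb2.
have t1 : (0 < t)%N by rewrite /t trunc_log_gt0 /=; lia.
have hMm : (M <= m.+1)%N by rewrite /M /m; lia.
have hMk : (M <= k)%N by rewrite /M; lia.
have hlow : (t * k <= 2 * G k 1 m.+1)%N.
  apply: leq_trans (lower k t) _; rewrite leq_mul2l /=; apply: G_mono.
  by rewrite expn_gt0 /=; exact: leq_trans hb1 hMm.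
have hup : (G k 1 m.+1 <= 3 * k * t.+1)%N.
  apply: leq_trans (@G_mono k m.+1 (2 ^ t.+1) _) (@upper k t.+1 _).
    by rewrite ltn0Sn /=; apply: leq_trans _ hb2; rewrite ltnS /m /M; lia.
  by rewrite expnS leq_mul2l /=; exact: leq_trans hb1 hMk.
split.
  have : ((k * t)%:R <= (2 * G k 1 m.+1)%:R :> rat) by rewrite ler_nat mulnC.
  rewrite natrM; lra.
have : ((G k 1 m.+1)%:R <= (6 * (k * t))%:R :> rat) by rewrite ler_nat; nia.
rewrite natrM; lra.
Qed.
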